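(* Let $d\ge2$, let $\mathbf A,\mathbf B\in\overline{\mathbb Q}[t]$ be nonzero coprime polynomials, $\mathbf c=\mathbf A/\mathbf B$, let $\lambda\in\overline{\mathbb Q}^*$ and let $|\cdot|_v$ be an absolute value on $\overline{\mathbb Q}$. Let $m\le1\le M$ be positive real numbers with $m\le|\lambda|_v\le M$. Then for all integers $1\le n_0\le n$, $$\left|\frac{\log M_{n,v}(\lambda)}{d^n}-\frac{\log M_{n_0,v}(\lambda)}{d^{n_0}}\right|\le\frac{\log(2M)-\log m}{d^{n_0}(d-1)}.$$
   Context: The polynomials $\mathbf A_{\mathbf c,n},\mathbf B_{\mathbf c,n}$ are defined by: $\mathbf A_{\mathbf c,0}=\mathbf A$, $\mathbf B_{\mathbf c,0}=\mathbf B$; if $\mathbf A(0)\neq0$ then $\mathbf A_{\mathbf c,1}=\mathbf A^d+t\mathbf B^d$, $\mathbf B_{\mathbf c,1}=\mathbf A\mathbf B^{d-1}$, while if $\mathbf A(0)=0$ then $\mathbf A_{\mathbf c,1}=(\mathbf A^d+t\mathbf B^d)/t$, $\mathbf B_{\mathbf c,1}=\mathbf A\mathbf B^{d-1}/t$; for $n\ge1$, $\mathbf A_{\mathbf c,n+1}=\mathbf A_{\mathbf c,n}^d+t\mathbf B_{\mathbf c,n}^d$, $\mathbf B_{\mathbf c,n+1}=\mathbf A_{\mathbf c,n}\mathbf B_{\mathbf c,n}^{d-1}$. Then $M_{n,v}(\lambda)=\max\{|\mathbf A_{\mathbf c,n}(\lambda)|_v,|\mathbf B_{\mathbf c,n}(\lambda)|_v\}$.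 *)

(* Defs.v *)
From HB Require Import structures.
From mathcomp Require Import all_boot all_order all_algebra all_field.
From mathcomp Require Import all_classical all_reals all_analysis.
Set Implicit Arguments. Unset Strict Implicit. Unset Printing Implicit Defensive.
Import Order.TTheory GRing.Theory Num.Theory.
Local Open Scope ring_scope.

(* Qbar is modelled by algC (the algebraic closure of Q in MathComp). *)

Definition is_absolute_value (R : realType) (v : algC -> R) : Prop :=
  [/\ (forall x, 0 <= v x),
      (forall x, v x = 0 <-> x = 0),
      (forall x y, v (x * y) = v x * v y) &
      (forall x y, v (x + y) <= v x + v y)].

Definition ABstep (d : nat) (p : {poly algC} * {poly algC}) :
    {poly algC} * {poly algC} :=
  (p.1 ^+ d + 'X * p.2 ^+ d, p.1 * p.2 ^+ d.-1).

Definition ABfirst (d : nat) (A B : {poly algC}) : {poly algC} * {poly algC} :=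
  if A.[0] != 0 then ABstep d (A, B)
  else ((ABstep d (A, B)).1 %/ 'X, (ABstep d (A, B)).2 %/ 'X).

Fixpoint ABc (d : nat) (A B : {poly algC}) (n : nat) :
    {poly algC} * {poly algC} :=
  match n with
  | 0 => (A, B)
  | k.+1 => match k with
            | 0 => ABfirst d A B
            | _ => ABstep d (ABc d A B k)
            end
  end.

Definition Mnv (R : realType) (v : algC -> R) (d : nat) (A B : {poly algC})
    (n : nat) (lam : algC) : R :=
  Num.max (v (ABc d A B n).1.[lam]) (v (ABc d A B n).2.[lam]).

(* Main.v *)
Require Import Defs.
From HB Require Import structures.
From mathcomp Require Import all_boot all_order all_algebra all_field.
From mathcomp Require Import all_classical all_reals all_analysis.
From mathcomp Require Import ring lra.
Import Order.TTheory GRing.Theory Num.Theory.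
Local Open Scope ring_scope.

Section Aux.
Variables (R : realType) (v : algC -> R).
Hypothesis hv : is_absolute_value v.

Lemma av_ge0 x : 0 <= v x. Proof. by case: hv. Qed.
Lemma av_M x y : v (x * y) = v x * v y. Proof. by case: hv. Qed.
Lemma av_D x y : v (x + y) <= v x + v y. Proof. by case: hv. Qed.
Lemma av_1 : v 1 = 1.
Proof.
have h1 : v 1 != 0 by apply/eqP; case: hv => _ H _ _ /H; apply/eqP; rewrite oner_eq0.
have := av_M 1 1; rewrite mulr1 => /(congr1 (fun z => z / v 1)).
by rewrite divff // mulfK.
Qed.
Lemma av_X x n : v (x ^+ n) = v x ^+ n.
Proof. elim: n => [|n IH]; first by rewrite !expr0 av_1. by rewrite !exprS av_M IH. Qed.
Lemma av_N x : v (- x) = v x.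
Proof.
have hm : v (-1) = 1.
  have := av_M (-1) (-1); rewrite mulrNN mulr1 av_1 => h.
  have h0 := av_ge0 (-1).
  have h2 : v (-1) <= 1 by nra.
  have h3 : 1 <= v (-1) by nra.
  lra.
by rewrite -mulN1r av_M hm mul1r.
Qed.

Lemma step_bounds (m M : R) (x y lam : algC) (e : nat) :
  0 < m -> m <= 1 -> 1 <= M -> m <= v lam -> v lam <= M ->
  let N := Num.max (v x) (v y) in
  let Y := Num.max (v (x ^+ e.+1 + lam * y ^+ e.+1)) (v (x * y ^+ e)) in
  m / (2 * M) * N ^+ e.+1 <= Y /\ Y <= 2 * M * N ^+ e.+1.
Proof.
move=> m0 m1 M1 ml lM N Y; rewrite /Y.
clear Y.
have hP1 : v (x ^+ e.+1 + lam * y ^+ e.+1) <= v x ^+ e.+1 + v lam * v y ^+ e.+1.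
  by apply: le_trans (av_D _ _) _; rewrite av_M !av_X.
have tri2 : forall s t, v t <= v (s + t) + v s.
  move=> s t; rewrite -[v s]av_N.
  have {1}-> : t = (s + t) + - s by rewrite addrC addKr.
  exact: av_D.
have hP2 : v lam * v y ^+ e.+1 <= v (x ^+ e.+1 + lam * y ^+ e.+1) + v x ^+ e.+1.
  by rewrite -(av_X x) -(av_X y) -av_M; apply: tri2.
have hP3 : v x ^+ e.+1 <= v (x ^+ e.+1 + lam * y ^+ e.+1) + v lam * v y ^+ e.+1.
  by rewrite -(av_X x) -(av_X y) -av_M [x ^+ _ + _]addrC; apply: tri2.
have hQ : v (x * y ^+ e) = v x * v y ^+ e by rewrite av_M av_X.
have a0 : 0 <= v x := av_ge0 x. have b0 : 0 <= v y := av_ge0 y.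
move: ml lM hP1 hP2 hP3 hQ a0 b0; rewrite /N; clear N tri2.
set a := v x; set b := v y; set l := v lam.
set P := v (x ^+ e.+1 + lam * y ^+ e.+1).
move=> ml lM hP1 hP2 hP3 hQ a0 b0.
set N := Num.max a b.
set Y := Num.max P (v (x * y ^+ e)).
have be0 : 0 <= b ^+ e := exprn_ge0 e b0.
have ae0 : 0 <= a ^+ e := exprn_ge0 e a0.
have l0 : 0 <= l by lra.
set c := m / (2 * M).
have c0 : 0 < c by rewrite /c divr_gt0 //; lra.
have cM : c * (2 * M) = m by rewrite /c mulfVK //; lra.
have N0 : 0 <= N by rewrite /N le_max a0.
have aN : a <= N by rewrite /N le_max lexx.
have bN : b <= N by rewrite /N le_max lexx orbT.
have aNe : a ^+ e <= N ^+ e by apply: lerXn2r.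
have bNe : b ^+ e <= N ^+ e by apply: lerXn2r.
have Ne0 : 0 <= N ^+ e := exprn_ge0 e N0.
have hY : Y = P \/ Y = a * b ^+ e.
  by rewrite /Y -hQ /Order.max; case: ifP => _; [right|left].
rewrite !exprS in hP1 hP2 hP3 *.
split; last first.
  have h1 : a * a ^+ e <= N * N ^+ e by apply: ler_pM.
  have h2 : b * b ^+ e <= N * N ^+ e by apply: ler_pM.
  have h3 : 0 <= N * N ^+ e by apply: mulr_ge0.
  case: hY => ->; nra.
have hPY : P <= Y by rewrite /Y le_max lexx.
have hQY : a * b ^+ e <= Y by rewrite /Y -hQ le_max lexx orbT.
have cM2 : c * 2 <= 1.
  have : c * (2 * M) <= M by lra.
  rewrite mulrA => hh; have : c * 2 * (M - 1) >= 0 by apply: mulr_ge0; lra.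
  nra.
case: (leP b a) => ab.
  have NE : N = a by rewrite /N max_l.
  rewrite NE.
  have h : b * b ^+ e <= a * b ^+ e by apply: ler_wpM2r.
  have h3 : 0 <= a * a ^+ e by apply: mulr_ge0.
  have h3' : 0 <= b * b ^+ e by apply: mulr_ge0.
  have hlB : l * (b * b ^+ e) <= M * (b * b ^+ e) by apply: ler_wpM2r.
  case: (leP (a * a ^+ e) (2 * M * (b * b ^+ e))) => h4.
    have hh : c * (a * a ^+ e) <= m * (b * b ^+ e).
      by rewrite -cM -mulrA; apply: ler_wpM2l => //; lra.
    have : m * (b * b ^+ e) <= b * b ^+ e by rewrite ler_piMl.
    lra.
  have : c * (a * a ^+ e) <= (a * a ^+ e) / 2.
    rewrite ler_pdivlMr // mulrAC; rewrite -[X in _ <= X]mul1r; apply: ler_wpM2r => //.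
  lra.
have NE : N = b by rewrite /N max_r // ltW.
rewrite NE.
have h3 : 0 <= b * b ^+ e by apply: mulr_ge0.
case: (leP (c * b) a) => h4.
  have : c * b * b ^+ e <= a * b ^+ e by apply: ler_wpM2r.
  rewrite -mulrA; lra.
have hc1 : c <= 1 by lra.
have h5 : a ^+ e <= (c * b) ^+ e.
  apply: lerXn2r; rewrite ?nnegrE //; last exact: ltW. apply: mulr_ge0 => //; lra.
rewrite exprMn in h5.
have h6 : c ^+ e <= 1 by apply: exprn_ile1; lra.
have h7 : c ^+ e * b ^+ e <= b ^+ e by rewrite ler_piMl // exprn_ge0 //; lra.
have h8 : a * a ^+ e <= (c * b) * (c ^+ e * b ^+ e).
  apply: ler_pM => //; first by apply: ltW.
have h9 : (c * b) * (c ^+ e * b ^+ e) <= c * (b * b ^+ e).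
  rewrite -mulrA; apply: ler_wpM2l; first lra.
  by apply: ler_wpM2l.
have hlB : m * (b * b ^+ e) <= l * (b * b ^+ e) by apply: ler_wpM2r.
have : 2 * (c * (b * b ^+ e)) <= m * (b * b ^+ e).
  rewrite mulrA; apply: ler_wpM2r => //.
  have : c * 2 <= c * (2 * M) by apply: ler_wpM2l; lra.
  rewrite cM; lra.
lra.
Qed.

End Aux.

Theorem proposition5p2 (R : realType) (d : nat) (A B : {poly algC})
    (lam : algC) (v : algC -> R) (m M : R) (n0 n : nat) :
  (2 <= d)%N -> A != 0 -> B != 0 -> coprimep A B ->
  lam != 0 -> is_absolute_value v ->
  0 < m -> m <= 1 -> 1 <= M -> m <= v lam -> v lam <= M ->
  (1 <= n0)%N -> (n0 <= n)%N ->
  `| ln (Mnv v d A B n lam) / d%:R ^+ n - ln (Mnv v d A B n0 lam) / d%:R ^+ n0 |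
    <= (ln (2 * M) - ln m) / (d%:R ^+ n0 * (d%:R - 1)).
Proof.
move=> d2 _ _ _ _ hv m0 m1 M1 ml lM n01 n0n.
have D1 : 1 < (d%:R : R) by rewrite ltr1n.
have C0 : 0 <= ln (2 * M) - ln m.
  have : 0 <= ln (2 * M) by apply: ln_ge0; lra.
  have : ln m <= 0 by apply: ln_le0.
  lra.
have Mge0 k : 0 <= Mnv v d A B k lam by rewrite /Mnv le_max av_ge0.
have rec j : Mnv v d A B j.+2 lam =
   Num.max (v ((ABc d A B j.+1).1.[lam] ^+ d + lam * (ABc d A B j.+1).2.[lam] ^+ d))
           (v ((ABc d A B j.+1).1.[lam] * (ABc d A B j.+1).2.[lam] ^+ d.-1)).
  by rewrite /Mnv /= /ABstep /= !hornerE.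
have bnd j : m / (2 * M) * Mnv v d A B j.+1 lam ^+ d <= Mnv v d A B j.+2 lam /\
             Mnv v d A B j.+2 lam <= 2 * M * Mnv v d A B j.+1 lam ^+ d.
  rewrite rec; clear rec Mge0; case: d d2 {D1} => [|e] // d2.
  rewrite /Mnv; exact: (@step_bounds R v hv m M _ _ lam e m0 m1 M1 ml lM).
set C := ln (2 * M) - ln m.
set D : R := d%:R.
pose L k := ln (Mnv v d A B k lam) / D ^+ k.
have D0 : 0 < D by lra.
have stepL j : `| L j.+2 - L j.+1 | <= C / D ^+ j.+2.
  have hDp : 0 < D ^+ j.+1 := exprn_gt0 _ D0.
  have [b1 b2] := bnd j.
  rewrite /L; set N := Mnv v d A B j.+1 lam; set N' := Mnv v d A B j.+2 lam.
  rewrite -/N -/N' in b1 b2.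
  have hN := Mge0 j.+1; rewrite -/N in hN.
  have hC : 0 <= C / D ^+ j.+2 by apply: divr_ge0 => //; apply: exprn_ge0; lra.
  have [N0|Npos] := eqVneq N 0.
    have N'0 : N' <= 0.
      have dn0 : d != 0%N by rewrite -lt0n (ltnW d2).
      by move: b2; rewrite N0 expr0n (negbTE dn0) mulr0.
    by rewrite N0 ln0 // ln0 // !mul0r subrr normr0.
  have Np : 0 < N by rewrite lt_neqAle eq_sym Npos hN.
  have NdP : 0 < N ^+ d := exprn_gt0 _ Np.
  have cP : 0 < m / (2 * M) by apply: divr_gt0 => //; lra.
  have N'p : 0 < N' by apply: lt_le_trans b1; apply: mulr_gt0.
  have lo : ln (m / (2 * M)) + ln N *+ d <= ln N'.
    rewrite -lnXn // -lnM ?posrE //.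
    by rewrite ler_ln ?posrE // mulr_gt0.
  have hi : ln N' <= ln (2 * M) + ln N *+ d.
    rewrite -lnXn // -lnM ?posrE // ?ler_ln ?posrE // ?mulr_gt0 //; lra.
  rewrite ln_div ?posrE // in lo; last lra.
  have lmle : ln m <= 0 by apply: ln_le0.
  have E : ln N' / D ^+ j.+2 - ln N / D ^+ j.+1 = (ln N' - ln N *+ d) / D ^+ j.+2.
    rewrite -mulr_natl -/D exprS; field.
    by rewrite -/D !gt_eqF // lt0r_neq0.
  rewrite E normrM [`|(D ^+ _)^-1|]ger0_norm; last by rewrite invr_ge0 exprn_ge0 // ltW.
  rewrite ler_pM2r ?invr_gt0 ?exprn_gt0 //.
  rewrite ler_norml; apply/andP; split; rewrite /C; lra.
pose S k := C / (D ^+ k * (D - 1)).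
have S0 k : 0 <= S k.
  rewrite /S divr_ge0 // mulr_ge0 // ?exprn_ge0; lra.
have Sstep i : S i - S i.+1 = C / D ^+ i.+1.
  rewrite /S exprS; field.
  apply/and3P; split; apply/lt0r_neq0 => //; rewrite ?exprn_gt0 //; lra.
have key k : `| L (n0 + k)%N - L n0 | <= S n0 - S (n0 + k)%N.
  elim: k => [|k IH]; first by rewrite addn0 !subrr normr0.
  rewrite addnS.
  have [j hj] : exists j, (n0 + k)%N = j.+1.
    by exists (n0 + k).-1; rewrite prednK // addn_gt0 n01.
  have st := stepL j; rewrite -hj in st.
  have tri : `| L (n0 + k).+1 - L n0 | <= `| L (n0 + k).+1 - L (n0 + k)%N | + `| L (n0 + k)%N - L n0 |.
    have -> : L (n0 + k).+1 - L n0 = (L (n0 + k).+1 - L (n0 + k)%N) + (L (n0 + k)%N - L n0).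
      by rewrite addrA subrK.
    exact: ler_normD.
  have := Sstep (n0 + k)%N.
  lra.
have := key (n - n0)%N; rewrite subnKC // => h.
rewrite /L /S in h; have := S0 n; rewrite /S; lra.
Qed.
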